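(* Let $(r_k)_{k\ge 1}$ be a sequence of real numbers and let $C_1, C_2, a, \gamma, \varepsilon$ be constants with $0<C_1<1$, $C_2>0$, $0<a<1$, $\gamma\in\mathbb{R}$, and $0<\varepsilon<1-a$. Suppose that for all integers $k\ge 1$, \[ r_{k+1} \le (1 - C_1 k^{-a})\, r_k + C_2\left(k^{-2a+\varepsilon} + k^{-2\gamma+a+\varepsilon}\right). \] Then there exists a constant $\mathscr{E}$ (independent of $k$) such that for all $k\ge 1$, \[ r_{k+1} \le \left(k^{-2\gamma+2a+\varepsilon} + k^{-a+\varepsilon}\right)\mathscr{E}. \]
   Context: In the paper's application, $\gamma$ is the exponent of the step sizes $\gamma_k = O(k^{-\gamma})$ and $a$ is the exponent of the averaging rates $\alpha_k=O(k^{-a})$, with $\gamma>a>0$; the lemma itself places no further condition on $\gamma$. *)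

(* Defs.v *)
From Stdlib Require Import Reals.
Open Scope R_scope.

(* Main.v *)
Require Import Defs.
From Stdlib Require Import Reals.
Open Scope R_scope.
From Stdlib Require Import Lra Lia Psatz.

Lemma my_exp_le x y : x <= y -> exp x <= exp y.
Proof. intros [H|H]; [left; apply exp_increasing; exact H | subst; lra]. Qed.

Lemma my_ln_le x y : 0 < x -> x <= y -> ln x <= ln y.
Proof. intros Hx [H|H]; [left; apply ln_increasing; lra | subst; lra]. Qed.

Lemma helperA p P u v : Rabs p <= P -> u <= v ->
  exp (p * u) <= exp (p * v) * exp (P * (v - u)).
Proof.
  intros Hp Huv. rewrite <- exp_plus. apply my_exp_le.
  assert (-P <= p) by (pose proof (Rle_abs (-p)); rewrite Rabs_Ropp in *; lra).
  nra.
Qed.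

Lemma helperB z : 0 <= z -> z <= 1/2 -> exp z <= 1 + 2 * z.
Proof.
  intros H0 H1. pose proof (exp_ineq1_le (- z)) as Hw.
  assert (He : exp z * exp (- z) = 1) by (rewrite <- exp_plus; replace (z + - z) with 0 by ring; apply exp_0).
  pose proof (exp_pos z). pose proof (exp_pos (-z)).
  assert (exp z * (1 - z) <= 1) by nra.
  nra.
Qed.

Lemma helperC x : 0 < x -> ln (x + 1) - ln x <= 1 / x.
Proof.
  intros Hx.
  assert (x + 1 <= x * exp (1 / x)).
  { pose proof (exp_ineq1_le (1/x)).
    assert (x * (1 + 1/x) = x + 1) by (field; lra). nra. }
  assert (ln (x + 1) <= ln (x * exp (1/x))) by (apply my_ln_le; lra).
  rewrite ln_mult, ln_exp in H0; try lra. apply exp_pos.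
Qed.

Theorem lemma2 (r : nat -> R) (C1 C2 a gamma eps : R)
  (hC1 : 0 < C1 < 1) (hC2 : 0 < C2) (ha : 0 < a < 1)
  (heps : 0 < eps < 1 - a)
  (hrec : forall k : nat, (1 <= k)%nat ->
     r (S k) <= (1 - C1 * Rpower (INR k) (- a)) * r k
                + C2 * (Rpower (INR k) (-2 * a + eps)
                        + Rpower (INR k) (-2 * gamma + a + eps))) :
  exists E : R, forall k : nat, (1 <= k)%nat ->
    r (S k) <= (Rpower (INR k) (-2 * gamma + 2 * a + eps)
                + Rpower (INR k) (- a + eps)) * E.
Proof.
  unfold Rpower in *.
  set (p1 := -2 * gamma + 2 * a + eps).
  set (p2 := - a + eps).
  set (s := fun k : nat => exp (p1 * ln (INR k)) + exp (p2 * ln (INR k))).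
  change (exists E, forall k, (1 <= k)%nat -> r (S k) <= s k * E).
  assert (spos : forall k, 0 < s k).
  { intro k; unfold s; pose proof (exp_pos (p1 * ln (INR k))); pose proof (exp_pos (p2 * ln (INR k))); lra. }
  set (P := Rabs p1 + Rabs p2 + 1).
  assert (HP : 0 < P) by (unfold P; pose proof (Rabs_pos p1); pose proof (Rabs_pos p2); lra).
  set (L := ln (8 * P / C1) / (1 - a)).
  destruct (INR_archimed 1 (exp L + 2)) as [K0 HK0]; [lra|].
  rewrite Rmult_1_r in HK0. pose proof (exp_pos L).
  assert (Phase1 : forall n, exists E, 2 * C2 / C1 <= E /\
            forall k, (1 <= k)%nat -> (k <= n)%nat -> r (S k) <= s k * E).
  { induction n as [|n [E [HE Hn]]].
    - exists (2 * C2 / C1); split; [lra | intros; lia].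
    - exists (Rmax E (r (S (S n)) / s (S n))). split.
      + eapply Rle_trans; [exact HE | apply Rmax_l].
      + intros k Hk1 Hk2. destruct (Nat.eq_dec k (S n)) as [->|Hne].
        * pose proof (spos (S n)).
          assert (r (S (S n)) = s (S n) * (r (S (S n)) / s (S n))) by (field; lra).
          rewrite H1 at 1. apply Rmult_le_compat_l; [lra | apply Rmax_r].
        * eapply Rle_trans; [apply Hn; lia|]. apply Rmult_le_compat_l; [pose proof (spos k); lra | apply Rmax_l]. }
  destruct (Phase1 K0) as [E [HE H1]].
  assert (HE0 : C2 <= E * C1 / 2).
  { assert (2 * C2 / C1 * C1 = 2 * C2) by (field; lra). nra. }
  exists E. induction k as [|k IH]; [intros; lia|]. intros Hk.
  destruct (Compare_dec.le_lt_dec (S k) K0) as [Hle|Hlt]; [apply H1; lia|].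
  assert (HkK : INR K0 <= INR k) by (apply le_INR; lia).
  assert (Hk1 : (1 <= k)%nat).
  { destruct k; [|lia]. simpl in HkK. lra. }
  specialize (IH Hk1).
  specialize (hrec (S k) ltac:(lia)).
  rewrite S_INR in hrec. unfold s. rewrite S_INR.
  set (x := INR k) in *.
  set (u := ln x) in *. set (v := ln (x + 1)) in *.
  set (e := exp (- a * v)) in *.
  assert (Hx2 : 2 < x) by lra.
  assert (hE1 : exp ((-2 * a + eps) * v) = e * exp (p2 * v)).
  { unfold e; rewrite <- exp_plus; f_equal; unfold p2; ring. }
  assert (hE2 : exp ((-2 * gamma + a + eps) * v) = e * exp (p1 * v)).
  { unfold e; rewrite <- exp_plus; f_equal; unfold p1; ring. }
  rewrite hE1, hE2 in hrec. fold e in hrec.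
  set (A1 := exp (p1 * v)) in *. set (A2 := exp (p2 * v)) in *.
  assert (Huv : u <= v) by (apply my_ln_le; lra).
  assert (HD : v - u <= 1 / x) by (apply helperC; lra).
  assert (Hv0 : 0 <= v) by (rewrite <- ln_1; apply my_ln_le; lra).
  assert (He1 : e <= 1) by (rewrite <- exp_0; apply my_exp_le; nra).
  assert (He0 : 0 < e) by apply exp_pos.
  assert (HvL : L <= v).
  { rewrite <- (ln_exp L). apply my_ln_le; lra. }
  assert (Hkey : 4 * P <= C1 * x * e).
  { assert (Hl : ln (8 * P / C1) <= (1 - a) * v).
    { assert (L * (1 - a) = ln (8 * P / C1)) by (unfold L; field; lra). nra. }
    apply my_exp_le in Hl. rewrite exp_ln in Hl.
    2: { apply Rdiv_lt_0_compat; lra. }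
    assert (exp ((1 - a) * v) = (x + 1) * e).
    { unfold e, v. replace ((1 - a) * ln (x + 1)) with (ln (x + 1) + - a * ln (x + 1)) by ring.
      rewrite exp_plus, exp_ln; lra. }
    assert (8 * P / C1 * C1 = 8 * P) by (field; lra).
    assert (8 * P / C1 * C1 <= (x + 1) * e * C1) by (apply Rmult_le_compat_r; lra).
    assert (C1 * e * (x + 1) <= C1 * e * (2 * x)) by (apply Rmult_le_compat_l; nra).
    nra. }
  set (z := P * (v - u)).
  assert (Hz0 : 0 <= z) by (unfold z; nra).
  assert (Hz1 : z <= C1 * e / 4).
  { assert (x * (1 / x) = 1) by (field; lra).
    unfold z.
    assert ((v - u) * x <= 1 / x * x) by (apply Rmult_le_compat_r; lra).
    assert (P * ((v - u) * x) <= P * 1) by (apply Rmult_le_compat_l; lra).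
    assert (P * (v - u) * x <= C1 * e / 4 * x) by nra.
    apply Rmult_le_reg_r with x; lra. }
  assert (Hq : exp z <= 1 + C1 * e / 2).
  { eapply Rle_trans; [apply helperB; nra|]. lra. }
  assert (Hs : s k <= (A1 + A2) * exp z).
  { unfold s. fold x u. unfold A1, A2, z.
    pose proof (helperA p1 P u v ltac:(unfold P; pose proof (Rabs_pos p2); lra) Huv).
    pose proof (helperA p2 P u v ltac:(unfold P; pose proof (Rabs_pos p1); lra) Huv).
    lra. }
  assert (HA : 0 < A1 + A2) by (unfold A1, A2; pose proof (exp_pos (p1 * v)); pose proof (exp_pos (p2 * v)); lra).
  assert (HE' : 0 <= E) by (assert (0 < 2 * C2 / C1) by (apply Rdiv_lt_0_compat; lra); lra).
  set (y := C1 * e) in *.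
  assert (Hy : 0 < y < 1) by (unfold y; split; nra).
  assert (Hrk : r (S k) <= (A1 + A2) * (1 + y / 2) * E).
  { eapply Rle_trans; [exact IH|]. apply Rmult_le_compat_r; [lra|].
    eapply Rle_trans; [exact Hs|]. apply Rmult_le_compat_l; lra. }
  assert (Hstep : (1 - y) * r (S k) <= (1 - y) * ((A1 + A2) * (1 + y / 2) * E))
    by (apply Rmult_le_compat_l; lra).
  assert (HC : C2 * e * (A1 + A2) <= E * y / 2 * (A1 + A2)).
  { apply Rmult_le_compat_r; [lra|]. unfold y. nra. }
  assert (0 <= y * y * (A1 + A2) * E) by (apply Rmult_le_pos; [|lra]; nra).
  nra.
Qed.
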